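(* The size $b$ of the smallest bidirectional scheme satisfies $\mathsf{MS}_{\mathrm{sub}}(b,n)\ge 2$ and $\mathsf{MS}_{\mathrm{ins}}(b,n)\ge 2$.
   Context: Strings are over an alphabet $\Sigma$ with at least two characters; $\mathsf{ed}$ is the edit distance. $\mathsf{MS}_{\mathrm{sub}}(C,n)=\max_{T\in\Sigma^n}\{C(T')/C(T): T'\in\Sigma^n,\ \mathsf{ed}(T,T')=1\}$ and $\mathsf{MS}_{\mathrm{ins}}(C,n)$ is the same with $T'\in\Sigma^{n+1}$. A bidirectional scheme of $T$ (length $n$) is a factorization $T=f_1\cdots f_b$ where each phrase $f_j=T[p_j..p_j+\ell_j-1]$ is either a single character (ground phrase) or is given a source $q_j\neq p_j$ with $T[q_j..q_j+\ell_j-1]=f_j$. It defines $F:[0..n]\to[0..n]$ by $F(p_j)=0$ for ground phrases, $F(p_j+k)=q_j+k$ for $0\le k<\ell_j$ otherwise, and $F(0)=0$; the scheme is valid if for every $x$ some iterate $F^m(x)=0$ ($m\ge1$). $b(T)$ is the minimum number of phrases of a valid bidirectional scheme of $T$. *)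

(* Defs.v *)
From HB Require Import structures.
From mathcomp Require Import all_boot all_order all_algebra.
From mathcomp Require Import boolp.
Set Implicit Arguments. Unset Strict Implicit. Unset Printing Implicit Defensive.
Import Order.TTheory GRing.Theory Num.Theory.

Section Defs.
Variable Sigma : eqType.

(* Levenshtein (unit-cost) edit distance: substitutions, insertions, deletions. *)
Fixpoint ed (s t : seq Sigma) {struct s} : nat :=
  match s with
  | [::] => size t
  | x :: s' =>
      let fix edx (t : seq Sigma) : nat :=
        match t with
        | [::] => size s
        | y :: t' => minn (minn (ed s' t).+1 (edx t').+1) (ed s' t' + (x != y))
        end
      in edx t
  end.

(* A phrase: [None] = ground phrase (a single character);
   [Some (q, l)] = phrase of length l with source starting at position q
   (positions are 1-based, as in the paper). *)
Definition phrase := option (nat * nat).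

Definition plen (ph : phrase) : nat :=
  match ph with None => 1 | Some (_, l) => l end.

Definition phrase_ok (T : seq Sigma) (p : nat) (ph : phrase) : Prop :=
  match ph with
  | None => True
  | Some (q, l) =>
      [/\ 0 < l, 0 < q, q <> p, q + l <= size T + 1 &
          take l (drop q.-1 T) = take l (drop p.-1 T)]
  end.

Fixpoint sources_ok (T : seq Sigma) (p : nat) (s : seq phrase) : Prop :=
  match s with
  | [::] => True
  | ph :: s' => phrase_ok T p ph /\ sources_ok T (p + plen ph) s'
  end.

(* F restricted to positions >= p, the phrases of s starting at p *)
Fixpoint Ffrom (s : seq phrase) (p x : nat) : nat :=
  match s with
  | [::] => 0
  | ph :: s' =>
      if x < p + plen ph then
        match ph with None => 0 | Some (q, _) => q + (x - p) end
      else Ffrom s' (p + plen ph) x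
  end.

Definition Fmap (s : seq phrase) (x : nat) : nat :=
  if x == 0 then 0 else Ffrom s 1 x.

Definition valid_scheme (T : seq Sigma) (s : seq phrase) : Prop :=
  [/\ sumn (map plen s) = size T,
      sources_ok T 1 s &
      forall x, x <= size T -> exists m, 0 < m /\ iter m (Fmap s) x = 0].

Lemma sources_ok_ground T p n : sources_ok T p (nseq n None).
Proof. by elim: n p => [|n IH] p //=; split. Qed.

Lemma Ffrom_ground n p x : Ffrom (nseq n None) p x = 0.
Proof. by elim: n p => [|n IH] p //=; case: ifP. Qed.

Lemma valid_scheme_exists (T : seq Sigma) :
  exists k, `[< exists s, valid_scheme T s /\ size s = k >].
Proof.
exists (size T); apply/asboolP; exists (nseq (size T) None); split; last first.
  by rewrite size_nseq.
split.
- by elim: (size T) => //= n ->.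
- exact: sources_ok_ground.
- move=> x _; exists 1; split => //=.
  by rewrite /Fmap Ffrom_ground; case: (x == 0).
Qed.

Definition bidir (T : seq Sigma) : nat := ex_minn (valid_scheme_exists T).

End Defs.

Section Sens.
Variable Sigma : finType.
Local Open Scope ring_scope.

Definition MS_sub (C : seq Sigma -> nat) (n : nat) : rat :=
  \big[Num.max/0]_(T : n.-tuple Sigma)
     \big[Num.max/0]_(T' : n.-tuple Sigma | ed T T' == 1%N)
        ((C T')%:R / (C T)%:R).

Definition MS_ins (C : seq Sigma -> nat) (n : nat) : rat :=
  \big[Num.max/0]_(T : n.-tuple Sigma)
     \big[Num.max/0]_(T' : n.+1.-tuple Sigma | ed T T' == 1%N)
        ((C T')%:R / (C T)%:R).
End Sens.

(* Main.v *)
Require Import Defs.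
From HB Require Import structures.
From mathcomp Require Import all_boot all_order all_algebra.
From mathcomp Require Import zify boolp.
Import Order.TTheory GRing.Theory Num.Theory.

Section Aux.
Variable S : eqType.

Lemma ed_cons (x y : S) s t :
  ed (x :: s) (y :: t) =
  minn (minn (ed s (y :: t)).+1 (ed (x :: s) t).+1) (ed s t + (x != y)).
Proof. by []. Qed.

Lemma ed_refl (s : seq S) : ed s s = 0%N.
Proof.
elim: s => [|x s IH] //; rewrite ed_cons IH eqxx; lia.
Qed.

Lemma ed_eq0 (s t : seq S) : ed s t = 0%N -> s = t.
Proof.
elim: s t => [|x s IH] [|y t] //=.
rewrite -/(ed (x :: s) (y :: t)) ed_cons => h.
have h1 : ed s t = 0%N by lia.
have h2 : (x != y) = false by lia.
by rewrite (IH _ h1); move/negbFE/eqP: h2 => ->.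
Qed.

Lemma ed_sub (x y : S) s : ed (x :: s) (y :: s) <= 1.
Proof. rewrite ed_cons ed_refl; lia. Qed.

Lemma ed_same (x : S) s t : ed (x :: s) (x :: t) <= ed s t.
Proof. rewrite ed_cons eqxx; lia. Qed.

Lemma ed_ins (x y : S) s : ed (x :: s) (y :: x :: s) <= 1.
Proof. rewrite ed_cons ed_refl; lia. Qed.

Lemma bidir_spec (T : seq S) k :
  (forall s, valid_scheme T s -> k <= size s) -> k <= bidir T.
Proof.
rewrite /bidir; case: ex_minnP => m /asboolP [s [hv <-]] _ H; exact: H.
Qed.

Lemma bidir_le (T : seq S) s : valid_scheme T s -> bidir T <= size s.
Proof.
rewrite /bidir; case: ex_minnP => m _ H hv; apply: H; apply/asboolP; by exists s.
Qed.

Lemma bidir_pos (T : seq S) : 0 < size T -> 0 < bidir T.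
Proof.
move=> hT; apply: bidir_spec => s [hs _ _].
by case: s hs => [|ph s] //= hs; lia.
Qed.

Variables a b : S.
Hypothesis hab : a != b.

Definition U m := [:: a; a; b] ++ nseq m a.

Lemma nthU m j : nth a (U m) j = if j == 2%N then b else a.
Proof. case: j => [|[|[|j]]] //=; rewrite nth_nseq; by case: ifP. Qed.

Lemma nth_tk (T : seq S) k l i : i < l -> nth a (take l (drop k T)) i = nth a T (k + i).
Proof. by move=> hi; rewrite nth_take // nth_drop. Qed.

Lemma some_ok {m p q l : nat} : phrase_ok (U m) p (Some (q, l)) -> 0 < p ->
  0 < l /\ 0 < q /\ q <> p /\ q + l <= m + 4 /\
     ~ (p <= 3 < p + l) /\ ~ (q <= 3 < q + l).
Proof.
move=> [hl hq hqp hql heq] hp; do 3 (split => //).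
split; first by move: hql; rewrite /U size_cat size_nseq /=; lia.
split => hin.
  have hi : (3 - p < l)%N by lia.
  have := congr1 (fun s => nth a s (3 - p)) heq => /=.
  rewrite !nth_tk // !nthU.
  have -> : (p.-1 + (3 - p) == 2)%N by lia.
  have -> : (q.-1 + (3 - p) == 2)%N = false by lia.
  by move=> e; move: hab; rewrite e eqxx.
have hi : (3 - q < l)%N by lia.
have := congr1 (fun s => nth a s (3 - q)) heq => /=.
rewrite !nth_tk // !nthU.
have -> : (q.-1 + (3 - q) == 2)%N by lia.
have -> : (p.-1 + (3 - q) == 2)%N = false by lia.
by move=> e; move: hab; rewrite e eqxx.
Qed.

Lemma U_lower m : (3 <= m)%N -> 4 <= bidir (U m).
Proof.
move=> hm; apply: bidir_spec => s [hsum hsrc _].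
rewrite /U size_cat size_nseq /= in hsum.
case: s hsum hsrc => [|p1 [|p2 [|p3 [|p4 s']]]] //=;
  rewrite ?addn0 => hsum hsrc.
- case: p1 hsum hsrc => [[q1 l1]|] hsum [h1 _]; last by simpl in *; lia.
  (have := some_ok h1 ltac:(simpl; lia)); simpl in *; lia.
- case: p1 hsum hsrc => [[q1 l1]|] hsum [h1 [h2 _]];
  case: p2 hsum h2 => [[q2 l2]|] hsum h2;
  try (have := some_ok h1 ltac:(simpl; lia));
  try (have := some_ok h2 ltac:(simpl; lia)); simpl in *; lia.
- case: p1 hsum hsrc => [[q1 l1]|] hsum [h1 [h2 [h3 _]]];
  case: p2 hsum h2 h3 => [[q2 l2]|] hsum h2 h3;
  case: p3 hsum h3 => [[q3 l3]|] hsum h3;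
  try (have := some_ok h1 ltac:(simpl; lia));
  try (have := some_ok h2 ltac:(simpl; lia));
  try (have := some_ok h3 ltac:(simpl; lia)); simpl in *; lia.
Qed.

Definition sch n : seq phrase := [:: None; Some (1%N, n.-1)].

Lemma A_upper n : (2 <= n)%N -> bidir (nseq n a) <= 2.
Proof.
move=> hn; apply: (@leq_trans (size (sch n))); last by [].
apply: bidir_le; split.
- rewrite /= size_nseq; lia.
- rewrite /=; split => //; split => //; split; rewrite ?size_nseq; try lia.
  rewrite drop0 add0n drop_nseq !take_nseq //; lia.
- move=> x hx; elim: x {-2}x (leqnn x) hx => [|k IH] x hxk hx.
    by exists 1%N; move: hxk; rewrite leqn0 => /eqP ->.
  case: x hxk hx => [|[|x]] hxk hx.
  + by exists 1%N.
  + by exists 1%N.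
  + have [m [hm Hm]] := IH x.+1 ltac:(lia) ltac:(lia).
    exists m.+1; split => //; rewrite iterSr.
    have -> : Fmap (sch n) x.+2 = x.+1.
      rewrite size_nseq in hx.
      rewrite /Fmap /= ifT; [lia|lia].
    exact: Hm.
Qed.

End Aux.

Local Open Scope ring_scope.

Lemma ratio_ge (x y : nat) : (0 < x)%N -> (x <= 2)%N -> (4 <= y)%N ->
  2 <= (y%:R / x%:R : rat).
Proof.
move=> h0 h1 h2; rewrite ler_pdivlMr ?ltr0n //.
rewrite -natrM ler_nat; lia.
Qed.

Theorem mainTheorem6 (Sigma : finType) (hSigma : (1 < #|Sigma|)%N) :
  exists N : nat, forall n : nat, (N <= n)%N ->
    2 <= MS_sub (@bidir Sigma) n /\ 2 <= MS_ins (@bidir Sigma) n.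
Proof.
case/card_gt1P: hSigma => a [b [_ _ hab]].
exists 6%N => n hn.
have hA0 : (0 < bidir (nseq n a))%N by apply: bidir_pos; rewrite size_nseq; lia.
have hA2 := @A_upper Sigma a b hab n ltac:(lia).
have hsplit : forall k, (k <= n)%N -> nseq n a = nseq k a ++ nseq (n - k) a.
  by move=> k hk; rewrite -nseqD subnKC.
set T := nseq_tuple n a.
split.
- have hs : size (U _ a b (n - 3)) == n by rewrite /U size_cat size_nseq /=; apply/eqP; lia.
  set T' := Tuple hs.
  apply: le_trans (le_bigmax _ _ T).
  have hed : ed T T' == 1%N.
    have eT : (T : seq Sigma) = a :: a :: a :: nseq (n - 3) a.
      by rewrite /= (hsplit 3%N) //; lia.
    rewrite eT; change (ed [:: a, a, a & nseq (n - 3) a] [:: a, a, b & nseq (n - 3) a] == 1%N).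
    apply/eqP; apply/anti_leq/andP; split.
      have h1 := @ed_same _ a [:: a, a & nseq (n-3) a] [:: a, b & nseq (n-3) a].
      have h2 := @ed_same _ a [:: a & nseq (n-3) a] [:: b & nseq (n-3) a].
      have h3 := @ed_sub _ a b (nseq (n-3) a). exact: (leq_trans h1 (leq_trans h2 h3)).
    rewrite lt0n; apply/eqP => /ed_eq0 [] /eqP; by rewrite (negbTE hab).
  apply: le_trans (le_bigmax_cond _ _ hed).
  apply: ratio_ge => //.
  exact: (@U_lower _ a b hab (n-3) ltac:(lia)).
- have hs : size (U _ a b (n - 2)) == n.+1 by rewrite /U size_cat size_nseq /=; apply/eqP; lia.
  set T' := Tuple hs.
  apply: le_trans (le_bigmax _ _ T).
  have hed : ed T T' == 1%N.
    have eT : (T : seq Sigma) = a :: a :: nseq (n - 2) a.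
      by rewrite /= (hsplit 2%N) //; lia.
    have eN : nseq (n - 2) a = a :: nseq (n - 3) a.
      have -> : (n - 2 = 1 + (n - 3))%N by lia.
      by [].
    rewrite eT; change (ed [:: a, a & nseq (n - 2) a] [:: a, a, b & nseq (n - 2) a] == 1%N).
    apply/eqP; apply/anti_leq/andP; split.
      have h1 := @ed_same _ a [:: a & nseq (n-2) a] [:: a, b & nseq (n-2) a].
      have h2 := @ed_same _ a (nseq (n-2) a) [:: b & nseq (n-2) a].
      have h3 := @ed_ins _ a b (nseq (n-3) a). rewrite eN in h1 h2 *. exact: (leq_trans h1 (leq_trans h2 h3)).
    rewrite lt0n; apply/eqP => /ed_eq0 [].
    rewrite eN => -[] /eqP; by rewrite (negbTE hab).
  apply: le_trans (le_bigmax_cond _ _ hed).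
  apply: ratio_ge => //.
  exact: (@U_lower _ a b hab (n-2) ltac:(lia)).
Qed.
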